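(* Let $X$ be a regular topological space. The following are equivalent: (a) $X$ is locally compact (every point has a compact neighborhood); (b) the quantale $\mathcal{O}(X)$ is blooming; (c) the m-filter $\{X\}\in\operatorname{mF}(\mathcal{O}(X))$ is locally solid.
   Context: $\mathcal{O}(X)$ is the quantale of open subsets of $X$, ordered by inclusion, with join = union, multiplication = intersection, top $X$. For a quantale $Q$ (poset with all nonempty joins, top $1$, commutative associative unital multiplication distributing over nonempty joins): an m-filter is a subset containing $1$, upward closed, closed under multiplication. Suspension: order nonempty subsets of $Q$ by $S\le T$ iff each $s\in S$ is below the join of finitely many elements of $T$; $\Sigma Q$ is the poset of equivalence classes with multiplication $S\cdot T=\{st\}$; $\sigma_Q:\Sigma Q\to Q$, $S\mapsto\sum S$. $Q$ is blooming if $\sigma_Q$ has a left adjoint $\sigma_Q^\flat$ (order-preserving with $\sigma_Q^\flat(x)\le S\iff x\le\sigma_Q(S)$) and $\sigma_Q^\flat(ab)=\sigma_Q^\flat(a)\cdot\sigma_Q^\flat(b)$ for all $a,b$. An m-filter $\mathcal{F}$ is locally solid if there is a nonempty $W\subseteq Q$ with $\sum W=1$ such that for every $w\in W$ and every nonempty family $(x_i)_{i\in I}$ with $\sum_ix_i\in\mathcal{F}$ there exist $t\in\mathcal{F}$ and a finite nonempty $I_0\subseteq I$ with $tw\le\sum_{i\in I_0}x_i$. *)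

(* Defs.v *)
From HB Require Import structures.
From mathcomp Require Import all_boot all_order.
From mathcomp Require Import all_classical all_reals all_analysis.
Set Implicit Arguments. Unset Strict Implicit. Unset Printing Implicit Defensive.
Local Open Scope classical_set_scope.

(* The quantale O(X): open subsets of X, join = union, product = intersection,
   top = setT.  A "subset of O(X)" is a set of sets all of which are open. *)
Section OX.
Variable X : topologicalType.

Definition locally_compact_pt : Prop :=
  forall x : X, exists K : set X, nbhs x K /\ compact K.

Definition subset_OX (S : set (set X)) : Prop := forall s, S s -> open s.

Definition susp_elt (S : set (set X)) : Prop := subset_OX S /\ S !=set0.

Definition sjoin (S : set (set X)) : set X := \bigcup_(s in S) s.

Definition susp_le (S T : set (set X)) : Prop :=
  forall s, S s -> exists (n : nat) (f : nat -> set X),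
    (0 < n)%N /\ (forall i, (i < n)%N -> T (f i)) /\
    s `<=` \bigcup_(i in [set i | (i < n)%N]) f i.

Definition susp_mul (S T : set (set X)) : set (set X) :=
  [set u | exists s t, S s /\ T t /\ u = s `&` t].

(* sigma_Q has a left adjoint sigma_flat (on equivalence classes: we pick
   representatives, so equalities in Sigma Q are mutual <=). *)
Definition blooming : Prop :=
  exists flat : set X -> set (set X),
    (forall a, open a -> susp_elt (flat a)) /\
    (forall a b, open a -> open b -> a `<=` b -> susp_le (flat a) (flat b)) /\
    (forall a S, open a -> susp_elt S ->
        (susp_le (flat a) S <-> a `<=` sjoin S)) /\
    (forall a b, open a -> open b ->
        susp_le (flat (a `&` b)) (susp_mul (flat a) (flat b)) /\
        susp_le (susp_mul (flat a) (flat b)) (flat (a `&` b))).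

Definition mfilter (F : set (set X)) : Prop :=
  subset_OX F /\ F setT /\
  (forall a b, F a -> open b -> a `<=` b -> F b) /\
  (forall a b, F a -> F b -> F (a `&` b)).

Definition locally_solid (F : set (set X)) : Prop :=
  exists W : set (set X), susp_elt W /\ sjoin W = setT /\
    forall w, W w ->
    forall (I : Type) (x : I -> set X),
      (exists i : I, True) -> (forall i, open (x i)) ->
      F (\bigcup_(i in setT) x i) ->
      exists t, F t /\ exists (n : nat) (g : nat -> I),
        (0 < n)%N /\ t `&` w `<=` \bigcup_(k in [set k | (k < n)%N]) x (g k).

End OX.

(* Main.v *)
Require Import Defs.
From HB Require Import structures.
From mathcomp Require Import all_boot all_order.
From mathcomp Require Import all_classical all_reals all_analysis.
From mathcomp Require Import finmap.
Local Open Scope classical_set_scope.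

Definition Xp (X : topologicalType) (p : X) : Type := X.
HB.instance Definition _ (X : topologicalType) (p : X) := Topological.copy (Xp X p) X.
HB.instance Definition _ (X : topologicalType) (p : X) := isPointed.Build (Xp X p) p.

Lemma cc (X : topologicalType) (K : set X) : compact K -> @cover_compact X K.
Proof.
move=> cK; case: (pselect (exists p : X, True)) => [[p _]|nX].
  have := @compact_cover (Xp X p) => E.
  have : @compact (Xp X p) K by [].
  by rewrite E.
move=> I D f _ _; exists fset0%fset => // x _; exfalso; apply: nX; by exists x.
Qed.

Section S.
Set Implicit Arguments. Unset Strict Implicit.
Variable X : topologicalType.

Lemma list_to_fam (T : set (set X)) (t0 : set X) (l : seq (set X)) (s : set X) :
  T t0 -> (forall u, u \in l -> T u) -> (forall x, s x -> exists2 u, u \in l & u x) ->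
  exists (n : nat) (f : nat -> set X), (0 < n)%N /\ (forall i, (i < n)%N -> T (f i)) /\
    s `<=` \bigcup_(i in [set i | (i < n)%N]) f i.
Proof.
move=> Tt0 Tl cov; exists (size l).+1, (fun i => nth t0 (t0 :: l) i).
split=> //; split.
  move=> i Hi; have : nth t0 (t0 :: l) i \in t0 :: l by apply: mem_nth.
  by rewrite inE => /orP [/eqP ->|/Tl].
move=> x sx; have [u ul ux] := cov x sx.
exists (index u l).+1; first by rewrite /= ltnS index_mem.
by rewrite /= nth_index.
Qed.

Lemma compact_fin (K : set X) (S : set (set X)) :
  compact K -> S !=set0 -> subset_OX S -> K `<=` sjoin S ->
  exists (n : nat) (f : nat -> set X), (0 < n)%N /\ (forall i, (i < n)%N -> S (f i)) /\
    K `<=` \bigcup_(i in [set i | (i < n)%N]) f i.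
Proof.
move=> cK0 [t0 St0] oS KS; have cK := cc X K cK0.
have [D' sub cov] := cK _ S id oS KS.
apply: (@list_to_fam S t0 D') => //; try (by move=> u /sub; rewrite in_setE).
all: by move=> x /cov [u uD ux]; exists u.
Qed.

Definition flat (a : set X) : set (set X) :=
  [set w | open w /\ exists K, compact K /\ closed K /\ w `<=` K /\ K `<=` a].

Hypothesis reg : regular_space X.
Hypothesis lc : locally_compact_pt X.

Lemma flat_cover (a : set X) (x : X) : open a -> a x -> exists2 w, flat a w & w x.
Proof.
move=> oa ax; have [K0 [K0x cK0]] := lc x.
have nax : nbhs x a by apply: open_nbhs_nbhs.
have : nbhs x (a `&` K0) by apply: filterI.
move=> /reg [V Vx clV].
exists (interior V); last by [].
split; first exact: open_interior.
exists (closure V); split.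
  by apply: (@subclosed_compact X (closure V) K0 (@closed_closure X V) cK0) => y /clV [].
split; first exact: closed_closure.
split; last by move=> y /clV [].
move=> y /nbhs_singleton; exact: subset_closure.
Qed.

Lemma flat_elt (a : set X) : susp_elt (flat a).
Proof.
split; first by move=> s [].
exists set0; split; first exact: open0.
exists set0; split; first exact: compact0.
split; first exact: closed0.
by split; move=> y.
Qed.

Lemma flat0 (a : set X) : flat a set0.
Proof.
split; first exact: open0.
exists set0; split; first exact: compact0.
split; first exact: closed0.
by split; move=> y.
Qed.

Lemma flat_adj (a : set X) (S : set (set X)) : open a -> susp_elt S ->
  (susp_le (flat a) S <-> a `<=` sjoin S).
Proof.
move=> oa [oS neS]; split.
  move=> le x ax; have [w fw wx] := flat_cover oa ax.
  have [n [f [_ [Sf cov]]]] := le w fw.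
  have [i ilt fxi] := cov x wx; exists (f i) => //; exact: Sf.
move=> aS w [ow [K [cK [_ [wK Ka]]]]].
have [n [f [n0 [Sf cov]]]] := compact_fin cK neS oS (subset_trans Ka aS).
exists n, f; split=> //; split=> //; exact: subset_trans wK cov.
Qed.

Lemma blooming_of : blooming X.
Proof.
exists flat; split; first by move=> a _; exact: flat_elt.
have adj := flat_adj.
split.
  move=> a b oa ob ab; apply/(adj _ _ oa (flat_elt b)).
  move=> x /ab bx; have [w fw wx] := flat_cover ob bx; by exists w.
split; first by move=> a S oa eS; exact: adj.
have eM : forall a b, susp_elt (susp_mul (flat a) (flat b)).
  move=> a b; split.
    move=> u [s [t [[os _] [[ot _] ->]]]]; exact: openI.
  by exists (set0 `&` set0), set0, set0; split; [exact: flat0|split; [exact: flat0|]].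
move=> a b oa ob; split.
  apply/(adj _ _ (openI oa ob) (eM a b)).
  move=> x [ax bx].
  have [w1 f1 w1x] := flat_cover oa ax; have [w2 f2 w2x] := flat_cover ob bx.
  by exists (w1 `&` w2) => //; exists w1, w2.
move=> u [s [t [[os [K1 [cK1 [clK1 [sK1 K1a]]]]] [[ot [K2 [cK2 [clK2 [tK2 K2b]]]]] ->]]]].
exists 1%N, (fun _ => s `&` t); split => //; split.
  move=> _ _; split; first exact: openI.
  exists (K1 `&` K2); split.
    by apply: (subclosed_compact (closedI clK1 clK2) cK1) => y [].
  split; first exact: closedI.
  split; first by move=> y [/sK1 ? /tK2 ?].
  by move=> y [/K1a ? /K2b ?].
by move=> y uy; exists 0%N.
Qed.

End S.

Lemma cc' (X : topologicalType) (p : X) (K : set X) : @cover_compact X K -> compact K.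
Proof.
move=> cK; have := @compact_cover (Xp X p) => E.
suff : @compact (Xp X p) K by [].
by rewrite E.
Qed.

Lemma sle_refl (X : topologicalType) (S : set (set X)) : susp_le S S.
Proof.
move=> s Ss; exists 1%N, (fun _ => s); split => //; split => // y sy; by exists 0%N.
Qed.

Lemma bloom_solid (X : topologicalType) : blooming X -> locally_solid [set setT : set X].
Proof.
move=> [fl [el [mono [adj mul]]]].
have eT := el setT openT.
have cov : sjoin (fl setT) = setT.
  apply/seteqP; split=> // y _.
  exact: ((adj setT (fl setT) openT eT).1 (@sle_refl X _) y I).
exists (fl setT); split=> //; split=> //.
move=> w Ww I x [i0 _] ox Fx.
pose S := [set s | exists i, x i = s].
have eS : susp_elt S.
  split; first by move=> s [i <-].
  by exists (x i0), i0.
have cS : setT `<=` sjoin S.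
  move=> y _; have : (\bigcup_(i in setT) x i) y by rewrite Fx.
  case=> i _ xi; exists (x i) => //; by exists i.
have [n [f [n0 [Sf cv]]]] := (adj setT S openT eS).2 cS w Ww.
have : forall j, exists i, (j < n)%N -> f j = x i.
  move=> j; case: (ltnP j n) => h.
    have [i e] := Sf j h; by exists i => _.
  by exists i0.
move=> /boolp.choice [g Hg].
exists setT; split => //; exists n, g; split => //.
move=> y [_ wy]; have [j jn fj] := cv y wy; exists j => //; by rewrite -(Hg j jn).
Qed.

Lemma solid_lc (X : topologicalType) : regular_space X ->
  locally_solid [set setT : set X] -> locally_compact_pt X.
Proof.
move=> reg [W [[oW neW] [cW sol]]] x.
have : sjoin W x by rewrite cW.
case=> w Ww wx.
have /reg [V Vx clV] : nbhs x w by apply: open_nbhs_nbhs; split => //; exact: oW.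
exists (closure V); split; first by apply: filterS Vx; exact: subset_closure.
apply: (cc' x) => I D f oF covK.
pose y : option I -> set X := fun o => match o with
  | None => ~` closure V
  | Some i => if pselect (D i) then f i else set0 end.
have oy : forall o, open (y o).
  case => [i|]; rewrite /y.
    by destruct (pselect (D i)) as [Di|nDi]; [exact: oF | exact: open0].
  exact (closed_openC (@closed_closure X V)).
have Fy : [set setT] (\bigcup_(o in setT) y o).
  rewrite /=; apply/seteqP; split=> // z _.
  case: (pselect (closure V z)) => [cz|ncz]; last by exists None.
  have [i Di fiz] := covK z cz; exists (Some i) => //=; by destruct (pselect (D i)).
have [t [Ft [n [g [n0 cv]]]]] := sol w Ww (option I) y (ex_intro _ None Logic.I) oy Fy.
pose l := [seq i <- pmap g (iota 0 n) | `[< D i >]].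
exists (seq_fset tt l).
  move=> i; rewrite seq_fsetE mem_filter => /andP [/asboolP Di _]; by rewrite in_setE.
move=> z cz.
have tz : (t `&` w) z by rewrite Ft; split => //; exact: (clV z cz).
have [k kn] := cv z tz.
rewrite /y; case E: (g k) => [i|]; last by [].
destruct (pselect (D i)) as [Di|nDi]; last by []. move=> fiz.
exists i => //; change (i \in seq_fset tt l); rewrite seq_fsetE mem_filter; apply/andP; split; first by apply/asboolP.
rewrite mem_pmap; apply/mapP; exists k; last by rewrite E.
by rewrite mem_iota add0n.
Qed.

Theorem mainTheorem10 (X : topologicalType) :
  regular_space X ->
  (mfilter [set setT : set X] /\
   (locally_compact_pt X <-> blooming X) /\
   (blooming X <-> locally_solid [set setT : set X])).
Proof.
move=> reg; split.
  split; first by move=> s ->; exact: openT.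
  split; first by [].
  split.
    move=> a b -> ob Tb; apply/seteqP; split=> // z _; exact: Tb.
  by move=> a b -> ->; rewrite /= setTI.
have ab : locally_compact_pt X -> blooming X := fun h => blooming_of reg h.
have bc := @bloom_solid X. have ca := solid_lc reg.
split; split; auto.
Qed.
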